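(* Let $\mathscr C,J$ be as defined below. The isomorphism classes of points of the topos $\mathfrak{Sh}(\mathscr C,J)$ are in canonical bijection with the disjoint union of (a) the set of isomorphism classes of abstract (non-trivial) rank one totally ordered abelian groups $H$, via $H\mapsto\mathfrak{q}_H$, and (b) the set of non-trivial rank one subgroups $H\subset\mathbb{R}$, via $H\mapsto\mathfrak{p}_H$. Here $\mathfrak{p}_H$ is the point given by the flat continuous functor $F_H(V)=V\cap H\cap(0,\infty)$ (morphisms $n$ acting by multiplication by $n$), and $\mathfrak{q}_H$ is the point given by the flat continuous functor $F'_H$ with $F'_H(V)=\emptyset$ if $0\notin V$ and $F'_H(V)=H_+:=\{h\in H\mid h>0\}$ if $0\in V$ (morphisms $n$ acting by multiplication by $n$ on $H_+$). (This disjoint union is the set of points of the arithmetic site over $\mathbb{R}_+^{\max}$, i.e. the sector $\mathbb{Q}^\times\backslash\mathbb{A}_{\mathbb{Q}}/\hat{\mathbb{Z}}^*$ of the adele class space of $\mathbb{Q}$.)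
   Context: $\mathbb{N}^{\times}$ is the multiplicative monoid of positive integers. $\mathscr C$ is the small category whose objects are the (possibly empty) bounded open subintervals of $[0,\infty)$ (including intervals $[0,a)$), with $\mathrm{Hom}_{\mathscr C}(\Omega,\Omega')=\{n\in\mathbb{N}^{\times}\mid n\Omega\subset\Omega'\}$ for $\Omega\neq\emptyset$, $\mathrm{Hom}_{\mathscr C}(\emptyset,\Omega')$ a singleton, composition being multiplication. $J$ is the Grothendieck topology on $\mathscr C$ generated by ordinary open covers of intervals by subintervals; $\mathfrak{Sh}(\mathscr C,J)$ is equivalent to the topos of $\mathbb{N}^{\times}$-equivariant sheaves of sets on $[0,\infty)$, denoted $[0,\infty)\rtimes\mathbb{N}^{\times}$. Points of this topos correspond to flat (i.e. filtering) continuous (i.e. sending covers to jointly surjective families) functors $\mathscr C\to\mathfrak{Sets}$. A rank one group is one isomorphic to a non-zero subgroup of $\mathbb{Q}$; an abstract rank one ordered group is a totally ordered abelian group order-isomorphic to a non-zero subgroup of $\mathbb{Q}$. *)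

(* Defs.v *)
From HB Require Import structures.
From mathcomp Require Import all_boot all_order all_algebra.
From mathcomp Require Import Rstruct.
From Stdlib Require Import Rdefinitions ProofIrrelevance.

Set Implicit Arguments.
Unset Strict Implicit.
Unset Printing Implicit Defensive.

Import Order.TTheory GRing.Theory Num.Theory.
Local Open Scope ring_scope.

Notation R := Rdefinitions.R.

(* Objects: (possibly empty) bounded open subintervals of [0,oo),      *)

Definition is_obj (U : R -> Prop) : Prop :=
  (forall x, ~ U x) \/
  (exists a b : R, 0 <= a /\ a < b /\ forall x, U x <-> (a < x /\ x < b)) \/
  (exists b : R, 0 < b /\ forall x, U x <-> (0 <= x /\ x < b)).

Record obj := Obj { oset :> R -> Prop; oset_ok : is_obj oset }.

Definition obj_empty (U : obj) : Prop := forall x, ~ U x.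

Definition hom (n : nat) (U V : obj) : Prop :=
  (0 < n)%nat /\ forall x, U x -> V (x *+ n).

(* Equality of morphisms U -> V : Hom(empty, V) is a singleton, so all
   n are identified when the source is empty; otherwise equality of n. *)
Definition hom_eq (U : obj) (n m : nat) : Prop := obj_empty U \/ n = m.

Record functor := Functor {
  F0 : obj -> Type;
  F1 : forall (n : nat) (U V : obj), hom n U V -> F0 U -> F0 V;
  F1_wd : forall n m U V (p : hom n U V) (q : hom m U V) (x : F0 U),
            hom_eq U n m -> F1 p x = F1 q x;
  F1_id : forall U (p : hom 1 U U) (x : F0 U), F1 p x = x;
  F1_comp : forall n m U V W (p : hom n U V) (q : hom m V W)
              (r : hom (m * n) U W) (x : F0 U),
            F1 q (F1 p x) = F1 r x
}.

Definition flat (F : functor) : Prop :=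
  (exists U, inhabited (F0 F U)) /\
  (forall U V (x : F0 F U) (y : F0 F V),
     exists W (z : F0 F W) n m (p : hom n W U) (q : hom m W V),
       F1 p z = x /\ F1 q z = y) /\
  (forall U V n m (p : hom n U V) (q : hom m U V) (x : F0 F U),
     F1 p x = F1 q x ->
     exists W (z : F0 F W) k (r : hom k W U),
       F1 r z = x /\ hom_eq W (n * k) (m * k)).

(* Continuous: sends the generating covers of J (ordinary open covers
   of an interval U by subintervals U_i, with inclusions 1 : U_i -> U)
   to jointly surjective families. *)
Definition continuous (F : functor) : Prop :=
  forall (U : obj) (I : Type) (Ui : I -> obj) (sub : forall i, hom 1 (Ui i) U),
    (forall x, U x -> exists i, Ui i x) ->
    forall y : F0 F U, exists i (z : F0 F (Ui i)), F1 (sub i) z = y.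

Definition iso_functor (F G : functor) : Prop :=
  exists (a : forall U, F0 F U -> F0 G U) (b : forall U, F0 G U -> F0 F U),
    (forall U x, b U (a U x) = x) /\ (forall U y, a U (b U y) = y) /\
    (forall n U V (p : hom n U V) (x : F0 F U), a V (@F1 F _ _ _ p x) = @F1 G _ _ _ p (a U x)).

Definition subgroupQ (S : rat -> Prop) : Prop :=
  S 0 /\ (forall x y, S x -> S y -> S (x - y)).

Definition subgroupR (H : R -> Prop) : Prop :=
  H 0 /\ (forall x y, H x -> H y -> H (x - y)).

Definition rank_one_R (H : R -> Prop) : Prop :=
  subgroupR H /\
  exists (S : rat -> Prop) (f : R -> rat),
    subgroupQ S /\ (exists q, S q /\ q <> 0) /\
    (forall x y, H x -> H y -> f (x + y) = f x + f y) /\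
    (forall x y, H x -> H y -> f x = f y -> x = y) /\
    (forall x, H x -> S (f x)) /\
    (forall q, S q -> exists x, H x /\ f x = q).

(* Abstract rank one ordered group: an abelian group with a relation le
   which is order-isomorphic (as an ordered group) to a non-zero subgroup
   of Q with its induced order (this forces le to be a translation
   invariant total order). *)
Record r1og := R1og {
  og_car : zmodType;
  og_le : og_car -> og_car -> Prop;
  og_rank1 : exists (S : rat -> Prop) (f : og_car -> rat),
    subgroupQ S /\ (exists q, S q /\ q <> 0) /\
    (forall x y, f (x + y) = f x + f y) /\
    (forall x y, f x = f y -> x = y) /\
    (forall x, S (f x)) /\
    (forall q, S q -> exists x, f x = q) /\
    (forall x y, og_le x y <-> f x <= f y)
}.

Definition og_pos (G : r1og) (h : og_car G) : Prop := og_le 0 h /\ h <> 0.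

Definition og_iso (G G' : r1og) : Prop :=
  exists phi : og_car G -> og_car G',
    (forall x y, phi (x + y) = phi x + phi y) /\
    (forall x y, phi x = phi y -> x = y) /\
    (forall y, exists x, phi x = y) /\
    (forall x y, @og_le G x y <-> @og_le G' (phi x) (phi y)).

Lemma subgroupR_add H : subgroupR H -> forall x y, H x -> H y -> H (x + y).
Proof.
move=> [H0 Hs] x y hx hy.
have hny : H (- y) by rewrite -sub0r; apply: Hs.
by rewrite -(opprK y); apply: Hs.
Qed.

Lemma subgroupR_muln H : subgroupR H -> forall x n, H x -> H (x *+ n).
Proof.
move=> hH x n hx; elim: n => [|n IH]; first by rewrite mulr0n; case: hH.
by rewrite mulrS; apply: subgroupR_add.
Qed.

Lemma sig_eqP (A : Type) (P : A -> Prop) (x y : {a : A | P a}) :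
  proj1_sig x = proj1_sig y -> x = y.
Proof.
case: x y => [a pa] [b pb] /= eab; subst b.
by congr exist; exact: proof_irrelevance.
Qed.

Definition FH0 (H : R -> Prop) (U : obj) : Type :=
  {x : R | U x /\ H x /\ 0 < x}.

Lemma FH_closed H (hH : rank_one_R H) n U V (p : hom n U V) (x : R) :
  U x /\ H x /\ 0 < x -> V (x *+ n) /\ H (x *+ n) /\ 0 < x *+ n.
Proof.
case: p => n0 incl [ux [hx x0]]; split; first exact: incl.
split; first by apply: subgroupR_muln => //; case: hH.
by rewrite pmulrn_lgt0.
Qed.

Definition FH1 H (hH : rank_one_R H) n U V (p : hom n U V) (x : FH0 H U) : FH0 H V :=
  exist _ (proj1_sig x *+ n) (FH_closed hH p (proj2_sig x)).

Lemma FH1_wd H (hH : rank_one_R H) n m U V (p : hom n U V) (q : hom m U V)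
  (x : FH0 H U) : hom_eq U n m -> FH1 hH p x = FH1 hH q x.
Proof.
case=> [emp|enm].
  by exfalso; exact: (emp _ (proj1 (proj2_sig x))).
by subst m; apply: sig_eqP.
Qed.

Lemma FH1_id H (hH : rank_one_R H) U (p : hom 1 U U) (x : FH0 H U) :
  FH1 hH p x = x.
Proof.
by apply: sig_eqP; rewrite /= mulr1n.
Qed.

Lemma FH1_comp H (hH : rank_one_R H) n m U V W (p : hom n U V) (q : hom m V W)
  (r : hom (m * n) U W) (x : FH0 H U) : FH1 hH q (FH1 hH p x) = FH1 hH r x.
Proof.
by apply: sig_eqP; rewrite /= -mulrnA mulnC.
Qed.

Definition FH H (hH : rank_one_R H) : functor :=
  Functor (@FH1_wd H hH) (@FH1_id H hH) (@FH1_comp H hH).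

Lemma og_pos_muln (G : r1og) (h : og_car G) n :
  (0 < n)%nat -> og_pos h -> og_pos (h *+ n).
Proof.
move=> n0 [le0 hn0].
case: (og_rank1 G) => S [f [_ [_ [fadd [finj [_ [_ fle]]]]]]].
have f0 : f 0 = 0.
  by apply: (addrI (f 0)); rewrite -fadd !addr0.
have fn : forall k, f (h *+ k) = f h *+ k.
  by elim=> [|k IH]; rewrite ?mulr0n // !mulrS fadd IH.
have fh : 0 < f h.
  have : f 0 <= f h by apply/fle.
  rewrite f0 => ge; rewrite lt_def ge andbT.
  by apply/eqP => e; apply: hn0; apply: finj; rewrite e f0.
have fhn : 0 < f (h *+ n) by rewrite fn pmulrn_lgt0.
split; first by apply/fle; rewrite f0 ltW.
by move=> e; move: fhn; rewrite e f0 ltxx.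
Qed.

Definition FQ0 (G : r1og) (U : obj) : Type :=
  {h : og_car G | og_pos h /\ U 0}.

Lemma FQ_closed (G : r1og) n U V (p : hom n U V) (h : og_car G) :
  og_pos h /\ U 0 -> og_pos (h *+ n) /\ V 0.
Proof.
case: p => n0 incl [ph u0]; split; first exact: og_pos_muln.
by have := incl 0 u0; rewrite mul0rn.
Qed.

Definition FQ1 (G : r1og) n U V (p : hom n U V) (x : FQ0 G U) : FQ0 G V :=
  exist _ (proj1_sig x *+ n) (FQ_closed p (proj2_sig x)).

Lemma FQ1_wd (G : r1og) n m U V (p : hom n U V) (q : hom m U V)
  (x : FQ0 G U) : hom_eq U n m -> FQ1 p x = FQ1 q x.
Proof.
case=> [emp|enm].
  by exfalso; exact: (emp _ (proj2 (proj2_sig x))).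
by subst m; apply: sig_eqP.
Qed.

Lemma FQ1_id (G : r1og) U (p : hom 1 U U) (x : FQ0 G U) : FQ1 p x = x.
Proof.
by apply: sig_eqP; rewrite /= mulr1n.
Qed.

Lemma FQ1_comp (G : r1og) n m U V W (p : hom n U V) (q : hom m V W)
  (r : hom (m * n) U W) (x : FQ0 G U) : FQ1 q (FQ1 p x) = FQ1 r x.
Proof.
by apply: sig_eqP; rewrite /= -mulrnA mulnC.
Qed.

Definition FQ (G : r1og) : functor :=
  Functor (@FQ1_wd G) (@FQ1_id G) (@FQ1_comp G).

(* Main.v *)
From Pilot Require Import Defs.
From HB Require Import structures.
From mathcomp Require Import all_boot all_order all_algebra.
From mathcomp Require Import Rstruct.
From mathcomp Require Import ring lra zify.
From Stdlib Require Import Rdefinitions Raxioms ClassicalEpsilon ProofIrrelevance.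
Import Pilot.Defs.
Set Implicit Arguments.
Unset Strict Implicit.
Unset Printing Implicit Defensive.
Import Order.TTheory GRing.Theory Num.Theory.
Local Open Scope ring_scope.
Bind Scope ring_scope with Rdefinitions.R.
Definition iv (a b x : R) : Prop := 0 <= x /\ a < x /\ x < b.
Arguments iv (a b x)%ring_scope.

Lemma is_obj_ext (P Q : R -> Prop) : is_obj P -> (forall x, P x <-> Q x) -> is_obj Q.
Proof.
move=> [h|[[a [b [h1 [h2 h3]]]]|[b [h1 h3]]]] e.
- by left=> x /e /h.
- by right; left; exists a, b; split => //; split => // x; rewrite -e.
- by right; right; exists b; split => // x; rewrite -e.
Qed.

Lemma is_obj_iv a b : is_obj (iv a b).
Proof.
case: (lerP b 0) => hb.
  by left=> x [h1 [h2 h3]]; lra.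
case: (lerP b a) => hab.
  by left=> x [h1 [h2 h3]]; lra.
case: (ltrP a 0) => ha.
  right; right; exists b; split => // x; rewrite /iv; split; first by move=> [? [? ?]].
  by move=> [h1 h2]; split => //; split => //; lra.
right; left; exists a, b; split => //; split => // x; rewrite /iv; split.
  by move=> [? [? ?]].
by move=> [h1 h2]; split; [lra | split; lra].
Qed.

Lemma obj_iv (U : obj) : exists a b, forall x, U x <-> iv a b x.
Proof.
case: U => P [h|[[a [b [h1 [h2 h3]]]]|[b [h1 h3]]]] /=.
- exists 0, 0 => x; split=> [/h //|[? [? ?]]]; lra.
- exists a, b => x; rewrite h3 /iv; split; last by case.
  by move=> [? ?]; split; [lra | split; lra].
- exists (-1), b => x; rewrite h3 /iv; split; last by move=> [? [? ?]]; split.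
  by move=> [? ?]; split; [lra | split; lra].
Qed.

Lemma obj_ge0 (U : obj) x : U x -> 0 <= x.
Proof. by case: (obj_iv U) => a [b e] /e [? _]. Qed.

Lemma is_obj_cap (U V : obj) : is_obj (fun x => U x /\ V x).
Proof.
case: (obj_iv U) => a [b eU]; case: (obj_iv V) => c [d eV].
have [a' [e1 e2]] : exists a', a <= a' /\ c <= a' /\ (a' = a \/ a' = c).
  by case: (lerP a c) => h; [exists c | exists a]; do ?split; lra.
have [b' [f1 f2]] : exists b', b' <= b /\ b' <= d /\ (b' = b \/ b' = d).
  by case: (lerP b d) => h; [exists b | exists d]; do ?split; lra.
apply: (is_obj_ext (is_obj_iv a' b')) => x; rewrite eU eV /iv; split.
  by move=> [h1 [h2 h3]]; repeat split; lra.
move=> [[h1 [h2 h3]] [h4 [h5 h6]]]; case: e2 => _ e2; case: f2 => _ f2.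
by repeat split => //; case: e2 => e; case: f2 => f; subst.
Qed.

Lemma archi_eps (d : R) : 0 < d -> exists k : nat, (k.+1%:R)^-1 < d.
Proof.
move=> d0; exists (Num.Def.archi_bound d^-1).
have d1 : 0 < d^-1 by rewrite invr_gt0.
have h := archi_boundP (ltW d1).
set k := Num.Def.archi_bound _ in h *.
have k1 : k%:R < k.+1%:R :> R by rewrite ltr_nat.
have kp : 0 < k.+1%:R :> R by rewrite ltr0n.
rewrite -(invrK d) ltf_pV2 ?posrE ?invr_gt0 //.
exact: lt_trans h k1.
Qed.

Definition ivo (a b : R) : obj := Obj (is_obj_iv a b).
Arguments ivo (a b)%ring_scope.
Definition capo (U V : obj) : obj := Obj (is_obj_cap U V).

Lemma is_obj_pre (n : nat) (U : obj) : (0 < n)%nat -> is_obj (fun w => U (w *+ n)).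
Proof.
move=> n0; case: (obj_iv U) => a [b e].
have np : 0 < n%:R :> R by rewrite ltr0n.
apply: (is_obj_ext (is_obj_iv (a / n%:R) (b / n%:R))) => w; rewrite e /iv -[w *+ n]mulr_natr.
by rewrite ltr_pdivrMr // ltr_pdivlMr // pmulr_lge0.
Qed.

Lemma is_obj_scl (n : nat) (U : obj) : (0 < n)%nat -> is_obj (fun y => U (y / n%:R)).
Proof.
move=> n0; case: (obj_iv U) => a [b e].
have np : 0 < n%:R :> R by rewrite ltr0n.
apply: (is_obj_ext (is_obj_iv (a * n%:R) (b * n%:R))) => w; rewrite e /iv.
by rewrite ltr_pdivrMr // ltr_pdivlMr // pmulr_lge0 // invr_gt0.
Qed.

Definition preo n U (h : (0 < n)%nat) : obj := Obj (is_obj_pre U h).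
Definition sclo n U (h : (0 < n)%nat) : obj := Obj (is_obj_scl U h).

Lemma hom_id U : hom 1 U U.
Proof. by split=> // x; rewrite mulr1n. Qed.

Lemma hom_comp n m U V W : hom n U V -> hom m V W -> hom (m * n) U W.
Proof.
move=> [n0 h1] [m0 h2]; split; first by rewrite muln_gt0 n0 m0.
by move=> x ux; rewrite mulnC mulrnA; apply: h2; apply: h1.
Qed.

Lemma hom_capl U V : hom 1 (capo U V) U.
Proof. by split=> // x [ux _]; rewrite mulr1n. Qed.
Lemma hom_capr U V : hom 1 (capo U V) V.
Proof. by split=> // x [_ vx]; rewrite mulr1n. Qed.

Lemma hom_pre n U (h : (0 < n)%nat) : hom n (preo U h) U.
Proof. by split. Qed.

Lemma hom_scl n U (h : (0 < n)%nat) : hom n U (sclo U h).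
Proof.
split=> // x ux; change (U ((x *+ n) / n%:R)); rewrite -[x *+ n]mulr_natr mulfK //.
by rewrite gt_eqF // ltr0n.
Qed.

Lemma hom_scl_sub n U V W (h : (0 < n)%nat) :
  hom n U V -> hom 1 W U -> hom 1 (sclo W h) V.
Proof.
move=> [_ hUV] [_ hWU]; split=> // y wy; change (W (y / n%:R)) in wy; rewrite mulr1n.
have -> : y = (y / n%:R) *+ n by rewrite -[_ *+ n]mulr_natr mulfVK // gt_eqF // ltr0n.
by apply: hUV; have := hWU _ wy; rewrite mulr1n.
Qed.

Lemma hom_pos n U V : hom n U V -> (0 < n)%nat.
Proof. by case. Qed.

Lemma mulrn_inj (T : numDomainType) (x : T) n m : x != 0 -> x *+ n = x *+ m -> n = m.
Proof.
move=> x0; rewrite -[x *+ n]mulr_natl -[x *+ m]mulr_natl => /(mulIf x0) /eqP.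
by rewrite eqr_nat => /eqP.
Qed.

Lemma mulrn_lt (T : numDomainType) (c : T) n m : 0 < c -> c *+ m < c *+ n -> (m < n)%nat.
Proof.
move=> c0; rewrite -[c *+ m]mulr_natl -[c *+ n]mulr_natl ltr_pM2r //.
by rewrite ltr_nat.
Qed.
Section SubQ.
Variables (S : rat -> Prop) (hS : subgroupQ S).

Lemma sQ0 : S 0. Proof. by case: hS. Qed.
Lemma sQB x y : S x -> S y -> S (x - y). Proof. by case: hS => _; apply. Qed.
Lemma sQN x : S x -> S (- x). Proof. by move=> h; rewrite -sub0r; apply: sQB => //; exact: sQ0. Qed.
Lemma sQD x y : S x -> S y -> S (x + y).
Proof. by move=> hx hy; rewrite -[y]opprK; apply: sQB => //; exact: sQN. Qed.
Lemma sQMn x n : S x -> S (x *+ n).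
Proof.
move=> hx; elim: n => [|n IH]; first by rewrite mulr0n; exact: sQ0.
by rewrite mulrS; apply: sQD.
Qed.
Lemma sQMz x (z : int) : S x -> S (x *~ z).
Proof.
move=> hx; case: z => n; first exact: sQMn.
by rewrite NegzE mulrNz; apply: sQN; apply: sQMn.
Qed.

Lemma Q_gcd c d : S c -> S d -> c != 0 ->
  exists e (i j : int), S e /\ c = e *~ i /\ d = e *~ j.
Proof.
move=> sc sd c0.
pose r := d / c; pose a := numq r; pose b := denq r.
have b0 : (b%:~R : rat) != 0 by rewrite intr_eq0 denq_neq0.
pose e := c / b%:~R.
have ec : c = e *~ b by rewrite -mulrzr /e divfK.
have ed : d = e *~ a.
  by rewrite -mulrzr /e /a numqE -/b /r; field; rewrite c0.
exists e, b, a; split => //.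
have [u [v huv]] := Bezoutz a b.
have g1 : gcdz a b = 1.
  by rewrite /gcdz; have := coprime_num_den r; rewrite /coprime => /eqP ->.
have -> : e = (e *~ a) *~ u + (e *~ b) *~ v.
  by rewrite -!mulrzA -mulrzDr (mulrC a u) (mulrC b v) huv g1.
by apply: sQD; apply: sQMz; rewrite -?ed -?ec.
Qed.
End SubQ.

Lemma intpos (T : realDomainType) (e c : T) (i : int) : 0 < c -> c = e *~ i ->
  exists n, (0 < n)%nat /\ ((0 < e /\ c = e *+ n) \/ (e < 0 /\ c = (- e) *+ n)).
Proof.
move=> c0 ec; rewrite ec in c0 *; case: i c0 {ec} => n c0.
  have c1 : 0 < e *+ n by [].
  exists n.
  have n0 : (0 < n)%nat.
    by rewrite lt0n; apply/eqP => e0; move: c1; rewrite e0 mulr0n ltxx.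
  rewrite -pmulrn.
  by split => //; left; split => //; move: c1; rewrite pmulrn_lgt0.
rewrite NegzE mulrNz -mulNrn in c0 *; exists n.+1; split => //; right; split => //.
by move: c0; rewrite pmulrn_lgt0 // oppr_gt0.
Qed.

Lemma pos_gcd (T : realDomainType) (e x y : T) (i j : int) :
  0 < x -> 0 < y -> x = e *~ i -> y = e *~ j ->
  exists w n m, (w = e \/ w = - e) /\ 0 < w /\ (0 < n)%nat /\ (0 < m)%nat /\
    x = w *+ n /\ y = w *+ m.
Proof.
move=> x0 y0 ex ey.
case: (intpos x0 ex) => n [n0 [[e0 xn]|[e0 xn]]];
case: (intpos y0 ey) => m [m0 [[e1 ym]|[e1 ym]]].
- by exists e, n, m; do !split => //; left.
- by have := lt_trans e1 e0; rewrite ltxx.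
- by have := lt_trans e0 e1; rewrite ltxx.
- by exists (- e), n, m; do !split => //; [right | rewrite oppr_gt0].
Qed.

Section RankOneR.
Variables (H : R -> Prop) (hH : rank_one_R H).

Lemma rH0 : H 0. Proof. by case: hH => [[h0 _] _]. Qed.
Lemma rHB x y : H x -> H y -> H (x - y). Proof. by case: hH => [[_ hs] _]; apply: hs. Qed.
Lemma rHN x : H x -> H (- x). Proof. by move=> h; rewrite -sub0r; apply: rHB => //; exact: rH0. Qed.
Lemma rHD x y : H x -> H y -> H (x + y).
Proof. by move=> hx hy; rewrite -[y]opprK; apply: rHB => //; exact: rHN. Qed.
Lemma rHMz x (z : int) : H x -> H (x *~ z).
Proof.
move=> hx; have hn : forall n, H (x *+ n).
  by move=> n; apply: subgroupR_muln => //; case: hH.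
by case: z => n; [exact: hn | rewrite NegzE mulrNz; apply: rHN; exact: hn].
Qed.

Lemma rH_gcd x y : H x -> H y -> 0 < x -> 0 < y ->
  exists z n m, H z /\ 0 < z /\ (0 < n)%nat /\ (0 < m)%nat /\ x = z *+ n /\ y = z *+ m.
Proof.
move=> hx hy x0 y0.
case: hH => _ [S [f [hS [_ [fadd [finj [fS fsurj]]]]]]].
have f0 : f 0 = 0.
  have := fadd 0 0 rH0 rH0; rewrite addr0 => e.
  by apply: (addrI (f 0)); rewrite -e addr0.
have fN : forall u, H u -> f (- u) = - f u.
  by move=> u hu; apply: (addrI (f u)); rewrite -(fadd _ _ hu (rHN hu)) !subrr f0.
have fMn : forall u n, H u -> f (u *+ n) = f u *+ n.
  move=> u n hu; elim: n => [|n IH]; first by rewrite !mulr0n.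
  by rewrite !mulrS fadd // ?IH //; apply: subgroupR_muln => //; case: hH.
have fMz : forall u (z : int), H u -> f (u *~ z) = f u *~ z.
  move=> u [] n hu; first exact: fMn.
  by rewrite !NegzE !mulrNz fN ?fMn //; apply: subgroupR_muln => //; case: hH.
have fx0 : f x != 0.
  apply/eqP => e; have : x = 0 by apply: finj => //; [exact: rH0 | rewrite f0].
  by move=> e'; move: x0; rewrite e' ltxx.
case: (Q_gcd hS (fS _ hx) (fS _ hy) fx0) => e [i [j [se [ei ej]]]].
case: (fsurj _ se) => z [hz fz].
have xz : x = z *~ i by apply: finj => //; [exact: rHMz | rewrite fMz // fz].
have yz : y = z *~ j by apply: finj => //; [exact: rHMz | rewrite fMz // fz].
case: (pos_gcd x0 y0 xz yz) => w [n [m [ew [w0 [n0 [m0 [xe ye]]]]]]].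
exists w, n, m; do !split => //.
by case: ew => ->; [| apply: rHN].
Qed.

Lemma rH_pos : exists h, H h /\ 0 < h.
Proof.
case: hH => _ [S [f [hS [[q [sq q0]] [fadd [finj [fS fsurj]]]]]]].
have f0 : f 0 = 0.
  have := fadd 0 0 rH0 rH0; rewrite addr0 => e.
  by apply: (addrI (f 0)); rewrite -e addr0.
case: (fsurj _ sq) => h [hh fh].
have h0 : h != 0 by apply/eqP => e; apply: q0; rewrite -fh e f0.
case: (ltrgtP h 0) => hs.
- by exists (- h); split; [exact: rHN | rewrite oppr_gt0].
- by exists h.
- by move: h0; rewrite hs eqxx.
Qed.
End RankOneR.

Section OG.
Variable G : r1og.

Lemma og_f : exists (S : rat -> Prop) (f : og_car G -> rat),
  subgroupQ S /\ (forall x y, f (x + y) = f x + f y) /\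
  (forall x y, f x = f y -> x = y) /\ (forall x, S (f x)) /\
  (forall q, S q -> exists x, f x = q) /\ (forall h, og_pos h <-> 0 < f h) /\
  (forall x y, og_le x y <-> f x <= f y) /\ f 0 = 0 /\ (forall x, f (- x) = - f x)
  /\ (forall x n, f (x *+ n) = f x *+ n).
Proof.
case: (og_rank1 G) => S [f [hS [_ [fadd [finj [fS [fsurj fle]]]]]]].
have f0 : f 0 = 0 by apply: (addrI (f 0)); rewrite -fadd !addr0.
have fN : forall x, f (- x) = - f x.
  by move=> x; apply: (addrI (f x)); rewrite -fadd !subrr.
have fpos : forall h, og_pos h <-> 0 < f h.
  move=> h; split.
    move=> [h1 h2]; have := (fle _ _).1 h1; rewrite f0 le_eqVlt => /orP [/eqP e|//].
    by case: h2; apply: finj; rewrite -e f0.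
  move=> h0; split; first by apply/fle; rewrite f0 ltW.
  by move=> e; move: h0; rewrite e f0 ltxx.
have fMn : forall x n, f (x *+ n) = f x *+ n.
  by move=> x n; elim: n => [|n IH]; rewrite ?mulr0n // !mulrS fadd IH.
exists S, f.
by do 9 (split => //).
Qed.

Lemma og_gcd (a b : og_car G) : og_pos a -> og_pos b ->
  exists e n m, og_pos e /\ (0 < n)%nat /\ (0 < m)%nat /\ a = e *+ n /\ b = e *+ m.
Proof.
case: og_f => S [f [hS [fadd [finj [fS [fsurj [fpos [_ [f0 [fN fMn]]]]]]]]]].
move=> /fpos a0 /fpos b0.
case: (Q_gcd hS (fS a) (fS b) (lt0r_neq0 a0)) => e [i [j [se [ei ej]]]].
case: (pos_gcd a0 b0 ei ej) => w [n [m [ew [w0 [n0 [m0 [xe ye]]]]]]].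
have sw : S w by case: ew => ->; [| apply: sQN].
case: (fsurj _ sw) => z fz.
exists z, n, m; split; first by apply/fpos; rewrite fz.
split => //; split => //.
by split; apply: finj; rewrite fMn fz; [exact: xe | exact: ye].
Qed.

Lemma og_exists : exists h : og_car G, og_pos h.
Proof.
case: (og_rank1 G) => S [f [hS [[q [sq q0]] _]]].
case: og_f => S' [f' [hS' [fadd [finj [fS [fsurj [fpos [_ [f0 [fN fMn]]]]]]]]]].
case: (og_rank1 G) => S2 [f2 [_ [[q2 [sq2 q20]] [f2add [f2inj [_ [f2surj _]]]]]]].
case: (f2surj _ sq2) => h f2h.
have f20 : f2 0 = 0 by apply: (addrI (f2 0)); rewrite -f2add !addr0.
have h0 : h <> 0 by move=> e; apply: q20; rewrite -f2h e f20.
have fh0 : f' h != 0 by apply/eqP => e; apply: h0; apply: finj; rewrite e f0.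
case: (ltrgtP (f' h) 0) => hs.
- by exists (- h); apply/fpos; rewrite fN oppr_gt0.
- by exists h; apply/fpos.
- by move: fh0; rewrite hs eqxx.
Qed.

Lemma og_tri (g : og_car G) : og_pos g \/ g = 0 \/ og_pos (- g).
Proof.
case: og_f => S [f [hS [fadd [finj [fS [fsurj [fpos [_ [f0 [fN fMn]]]]]]]]]].
case: (ltrgtP (f g) 0) => h.
- by right; right; apply/fpos; rewrite fN oppr_gt0.
- by left; apply/fpos.
- by right; left; apply: finj; rewrite h f0.
Qed.

Lemma og_pos_neg (g : og_car G) : og_pos g -> og_pos (- g) -> False.
Proof.
case: og_f => S [f [hS [fadd [finj [fS [fsurj [fpos [_ [f0 [fN fMn]]]]]]]]]].
move=> /fpos h1 /fpos; rewrite fN oppr_gt0 => h2.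
by have := lt_trans h2 h1; rewrite ltxx.
Qed.

Lemma og_pos_ne0 (g : og_car G) : og_pos g -> g <> 0.
Proof. by move=> [_ h]. Qed.

Lemma og_pos_add (a b : og_car G) : og_pos a -> og_pos b -> og_pos (a + b).
Proof.
case: og_f => S [f [hS [fadd [finj [fS [fsurj [fpos [_ [f0 [fN fMn]]]]]]]]]].
by move=> /fpos h1 /fpos h2; apply/fpos; rewrite fadd addr_gt0.
Qed.

Lemma og_le_iff (x y : og_car G) : og_le x y <-> y - x = 0 \/ og_pos (y - x).
Proof.
case: og_f => S [f [hS [fadd [finj [fS [fsurj [fpos [fle [f0 [fN fMn]]]]]]]]]].
rewrite fle fpos fadd fN subr_gt0; split.
  rewrite le_eqVlt => /orP [/eqP e|h]; last by right.
  by left; apply: finj; rewrite fadd fN e subrr f0.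
case=> [e|/ltW //]; have := congr1 f e; rewrite fadd fN f0 => /eqP.
by rewrite subr_eq0 => /eqP ->.
Qed.

Lemma og_mulrn_inj (h : og_car G) n m : og_pos h -> h *+ n = h *+ m -> n = m.
Proof.
case: og_f => S [f [hS [fadd [finj [fS [fsurj [fpos [_ [f0 [fN fMn]]]]]]]]]].
move=> /fpos h0 e; have := congr1 f e; rewrite !fMn.
by apply: mulrn_inj; apply: lt0r_neq0.
Qed.
End OG.
Definition bS (S : rat -> Prop) (q : rat) : bool :=
  if excluded_middle_informative (S q) then true else false.

Lemma bSP S q : bS S q <-> S q.
Proof. by rewrite /bS; case: excluded_middle_informative. Qed.

Record carS (S : rat -> Prop) (hS : subgroupQ S) := CarS { cval : rat; cvalP : bS S cval }.

HB.instance Definition _ S hS := [isSub for @cval S hS].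
HB.instance Definition _ S hS := [Choice of @carS S hS by <:].

Section CarS.
Variables (S : rat -> Prop) (hS : subgroupQ S).

Lemma bS0 : bS S 0. Proof. by apply/bSP; case: hS. Qed.
Lemma bSB x y : bS S x -> bS S y -> bS S (x - y).
Proof. by move=> /bSP hx /bSP hy; apply/bSP; case: hS => _; apply. Qed.
Lemma bSN x : bS S x -> bS S (- x).
Proof. by move=> hx; rewrite -sub0r; apply: bSB => //; exact: bS0. Qed.
Lemma bSD x y : bS S x -> bS S y -> bS S (x + y).
Proof. by move=> hx hy; rewrite -[y]opprK; apply: bSB => //; exact: bSN. Qed.

Definition czero : carS hS := CarS hS bS0.
Definition copp (x : carS hS) : carS hS := CarS hS (bSN (cvalP x)).
Definition cadd (x y : carS hS) : carS hS := CarS hS (bSD (cvalP x) (cvalP y)).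

Lemma caddA : associative cadd.
Proof. by move=> x y z; apply: val_inj; rewrite /= addrA. Qed.
Lemma caddC : commutative cadd.
Proof. by move=> x y; apply: val_inj; rewrite /= addrC. Qed.
Lemma cadd0 : left_id czero cadd.
Proof. by move=> x; apply: val_inj; rewrite /= add0r. Qed.
Lemma caddN : left_inverse czero copp cadd.
Proof. by move=> x; apply: val_inj; rewrite /= addNr. Qed.
End CarS.

HB.instance Definition _ S hS := GRing.isZmodule.Build (@carS S hS)
  (@caddA S hS) (@caddC S hS) (@cadd0 S hS) (@caddN S hS).

Lemma cvalD S hS (x y : @carS S hS) : cval (x + y) = cval x + cval y.
Proof. by []. Qed.
Lemma cval0 S hS : cval (0 : @carS S hS) = 0.
Proof. by []. Qed.
Lemma cvalMn S hS (x : @carS S hS) n : cval (x *+ n) = cval x *+ n.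
Proof. by elim: n => [|n IH]; rewrite ?mulr0n // !mulrS cvalD IH. Qed.

Definition mkG (S : rat -> Prop) (hS : subgroupQ S) (hnz : exists q, S q /\ q <> 0) : r1og.
Proof.
refine (@R1og (@carS S hS) (fun x y => cval x <= cval y) _).
exists S, (@cval S hS); split => //; split => //; split; first exact: cvalD.
split; first by move=> x y e; apply: val_inj.
split; first by move=> x; apply/bSP; exact: cvalP.
split => // q sq.
have bq : bS S q by apply/bSP.
by exists (CarS hS bq).
Defined.

Lemma mkG_pos S hS hnz (h : og_car (@mkG S hS hnz)) : og_pos h <-> 0 < cval h.
Proof.
rewrite /og_pos /=; split.
  move=> [h1 h2]; rewrite lt_def h1 andbT; apply/eqP => e; apply: h2; apply: val_inj.
  by rewrite /= e.
move=> h0; split; first exact: ltW.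
by move=> e; move: h0; rewrite e cval0 ltxx.
Qed.

Lemma cap_pre n m (U V : obj) (hn : (0 < n)%nat) (hm : (0 < m)%nat) :
  { W : obj | (forall w, W w <-> U (w *+ n) /\ V (w *+ m)) /\ hom n W U /\ hom m W V }.
Proof.
exists (capo (preo U hn) (preo V hm)); split; first by [].
split; split => // w [h1 h2] //.
Qed.

Lemma flat_FH H (hH : rank_one_R H) : flat (FH hH).
Proof.
split.
  case: (rH_pos hH) => h [hh h0].
  exists (ivo 0 (h + 1)); constructor; exists h; split; last by [].
  by rewrite /= /iv; split; [exact: ltW | split => //; lra].
split.
  move=> U V [x [ux [hx x0]]] [y [uy [hy y0]]].
  case: (rH_gcd hH hx hy x0 y0) => z [n [m [hz [z0 [n0 [m0 [ex ey]]]]]]].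
  case: (cap_pre U V n0 m0) => W [eW [p q]].
  have wz : W z by apply/eW; rewrite -ex -ey.
  exists W, (exist _ z (conj wz (conj hz z0))), n, m, p, q.
  by split; apply: sig_eqP => /=.
move=> U V n m p q x e.
have e' := congr1 (@proj1_sig _ _) e; move: e' => /= e'.
have nm : n = m.
  apply: (mulrn_inj _ e'); apply: lt0r_neq0; by case: (proj2_sig x) => _ [].
exists U, x, 1%nat, (hom_id U); split; first exact: FH1_id.
by right; rewrite !muln1.
Qed.

Lemma cont_FH H (hH : rank_one_R H) : continuous (FH hH).
Proof.
move=> U I Ui sub cov [y [uy [hy y0]]].
case: (cov _ uy) => i ui.
exists i, (exist _ y (conj ui (conj hy y0))).
by apply: sig_eqP => /=; rewrite mulr1n.
Qed.

Lemma flat_FQ G : flat (FQ G).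
Proof.
split.
  case: (og_exists G) => h hp.
  exists (ivo (-1) 1); constructor; exists h; split => //.
  by rewrite /= /iv; split => //; split; lra.
split.
  move=> U V [x [px u0]] [y [py v0]].
  case: (og_gcd px py) => z [n [m [pz [n0 [m0 [ex ey]]]]]].
  case: (cap_pre U V n0 m0) => W [eW [p q]].
  have w0 : W 0 by apply/eW; rewrite !mul0rn.
  exists W, (exist _ z (conj pz w0)), n, m, p, q.
  by split; apply: sig_eqP => /=.
move=> U V n m p q x e.
have e' := congr1 (@proj1_sig _ _) e; move: e' => /= e'.
have nm : n = m.
  by apply: (og_mulrn_inj _ e'); case: (proj2_sig x).
exists U, x, 1%nat, (hom_id U); split; first exact: FQ1_id.
by right; rewrite !muln1.
Qed.

Lemma cont_FQ G : continuous (FQ G).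
Proof.
move=> U I Ui sub cov [y [py u0]].
case: (cov _ u0) => i ui.
exists i, (exist _ y (conj py ui)).
by apply: sig_eqP => /=; rewrite mulr1n.
Qed.

Lemma disjoint_FH_FQ H (hH : rank_one_R H) G : ~ iso_functor (FH hH) (FQ G).
Proof.
move=> [a [b [_ [_ _]]]].
case: (rH_pos hH) => h [hh h0].
have uh : ivo (h / 2) (h + 1) h.
  by rewrite /= /iv; split; [exact: ltW | split; lra].
case: (proj2_sig (a _ (exist _ h (conj uh (conj hh h0))))) => _ [_ [h1 _]].
lra.
Qed.

Lemma iso_sym F G : iso_functor F G -> iso_functor G F.
Proof.
move=> [a [b [ab [ba nat]]]]; exists b, a; split => //; split => //.
move=> n U V p y.
apply: (can_inj (ab V)).
by rewrite ba nat ba.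
Qed.

Lemma FH_inj_dir H H' (hH : rank_one_R H) (hH' : rank_one_R H') :
  iso_functor (FH hH) (FH hH') -> forall x, H x -> H' x.
Proof.
move=> [a [b [ab [ba nat]]]].
suff pos : forall x, H x -> 0 < x -> H' x.
  move=> x hx; case: (ltrgtP x 0) => s.
  - rewrite -[x]opprK; apply: (rHN hH'); apply: pos; first exact: (rHN hH).
    by rewrite oppr_gt0.
  - exact: pos.
  - by rewrite s; exact: (rH0 hH').
move=> x hx x0.
pose U := ivo 0 (x + 1).
have ux : U x by rewrite /U /= /iv; split; [exact: ltW | split; lra].
pose y := proj1_sig (a U (exist _ x (conj ux (conj hx x0)))).
have hy : H' y by case: (proj2_sig (a U (exist _ x (conj ux (conj hx x0))))) => _ [].
suff -> : x = y by [].
apply: NNPP => nxy.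
pose d := `|y - x|.
have d0 : 0 < d by rewrite normr_gt0 subr_eq0; apply/eqP => e; apply: nxy.
pose V := capo U (ivo (x - d) (x + d)).
have vx : V x.
  split => //; rewrite /= /iv; split; [exact: ltW | rewrite -/d; split; lra].
have := nat 1%nat V U (hom_capl U _) (exist _ x (conj vx (conj hx x0))).
set xV := exist _ x _.
have -> : @F1 (FH hH) _ _ _ (hom_capl U (ivo (x - d) (x + d))) xV = exist _ x (conj ux (conj hx x0)).
  by apply: sig_eqP; rewrite /= mulr1n.
move=> e; have e' := congr1 (@proj1_sig _ _) e; rewrite /= mulr1n -/y in e'.
case: (proj2_sig (a V xV)) => [[_ [_ [h1 h2]]] _]; rewrite -e' in h1 h2.
move: h1 h2; rewrite -/d /d.
case: (lerP 0 (y - x)) => s; [rewrite ger0_norm // | rewrite ltr0_norm //]; lra.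
Qed.

Lemma FH_inj H H' (hH : rank_one_R H) (hH' : rank_one_R H') :
  iso_functor (FH hH) (FH hH') <-> (forall x, H x <-> H' x).
Proof.
split.
  move=> iso x; split; first exact: FH_inj_dir iso x.
  exact: FH_inj_dir (iso_sym iso) x.
move=> e.
have f1 : forall U (x : FH0 H U), U (proj1_sig x) /\ H' (proj1_sig x) /\ 0 < proj1_sig x.
  by move=> U [x [ux [hx x0]]]; split => //; split => //; apply/e.
have f2 : forall U (x : FH0 H' U), U (proj1_sig x) /\ H (proj1_sig x) /\ 0 < proj1_sig x.
  by move=> U [x [ux [hx x0]]]; split => //; split => //; apply/e.
exists (fun U x => exist _ (proj1_sig x) (f1 U x)), (fun U x => exist _ (proj1_sig x) (f2 U x)).
split; first by move=> U x; apply: sig_eqP.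
split; first by move=> U x; apply: sig_eqP.
by move=> n U V p x; apply: sig_eqP.
Qed.

Lemma rank_one_img (S : rat -> Prop) (t0 : R) : subgroupQ S -> (exists q, S q /\ q <> 0) ->
  0 < t0 -> rank_one_R (fun h => exists q, S q /\ h = ratr q * t0).
Proof.
move=> hS nz t0p.
have t0n : t0 != 0 by apply: lt0r_neq0.
have uniq : forall q1 q2 : rat, ratr q1 * t0 = ratr q2 * t0 -> q1 = q2.
  by move=> q1 q2 /(mulIf t0n) /fmorph_inj.
split.
  split; first by exists 0; split; [exact: sQ0 | rewrite rmorph0 mul0r].
  move=> x y [q1 [s1 ->]] [q2 [s2 ->]]; exists (q1 - q2); split; first exact: sQB.
  by rewrite rmorphB mulrBl.
pose f (h : R) := epsilon (inhabits 0) (fun q => h = ratr q * t0).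
have fE : forall q, f (ratr q * t0) = q.
  move=> q; apply: uniq; symmetry.
  exact: (epsilon_spec (inhabits 0) (fun q' => ratr q * t0 = ratr q' * t0) (ex_intro _ q erefl)).
exists S, f; split => //; split => //.
split; first by move=> x y [q1 [s1 ->]] [q2 [s2 ->]]; rewrite -mulrDl -rmorphD !fE.
split; first by move=> x y [q1 [s1 ->]] [q2 [s2 ->]]; rewrite !fE => ->.
split; first by move=> x [q [sq ->]]; rewrite fE.
by move=> q sq; exists (ratr q * t0); split; [exists q | rewrite fE].
Qed.

Lemma og_iso_of (G G' : r1og) (al : og_car G -> og_car G') :
  (forall h, og_pos h -> og_pos (al h)) ->
  (forall h h', og_pos h -> og_pos h' -> al (h + h') = al h + al h') ->
  (forall h h', og_pos h -> og_pos h' -> al h = al h' -> h = h') ->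
  (forall h', og_pos h' -> exists h, og_pos h /\ al h = h') ->
  og_iso G G'.
Proof.
move=> apos aadd ainj asurj.
pose phi (g : og_car G) : og_car G' :=
  if excluded_middle_informative (og_pos g) then al g
  else if excluded_middle_informative (og_pos (- g)) then - al (- g) else 0.
have phip : forall g, og_pos g -> phi g = al g.
  by move=> g hg; rewrite /phi; case: excluded_middle_informative.
have phin : forall g, og_pos (- g) -> phi g = - al (- g).
  move=> g hg; rewrite /phi; case: excluded_middle_informative => [h|nh].
    by case: (og_pos_neg h hg).
  by case: excluded_middle_informative.
have phi0 : phi 0 = 0.
  rewrite /phi; case: excluded_middle_informative => [h|nh].
    by case: (og_pos_ne0 h).
  case: excluded_middle_informative => [h|//].
  by case: (og_pos_ne0 h); rewrite oppr0.
have [e ep] := og_exists G.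
have dec : forall g : og_car G, exists p q, og_pos p /\ og_pos q /\ g = p - q.
  move=> g; case: (og_tri g) => [hg|[->|hg]].
  - by exists (g + e), e; split; [exact: og_pos_add | split => //; rewrite addrK].
  - by exists e, e; rewrite subrr.
  - exists e, (e + - g); split => //; split; first exact: og_pos_add.
    by rewrite opprD opprK addrA subrr add0r.
have phisub : forall p q : og_car G, og_pos p -> og_pos q -> phi (p - q) = al p - al q.
  move=> p q pp pq; case: (og_tri (p - q)) => [h|[h|h]].
  - rewrite phip //; have := aadd _ _ h pq; rewrite subrK => ->.
    by rewrite addrK.
  - have -> : p = q by apply/eqP; rewrite -subr_eq0 h.
    by rewrite !subrr phi0.
  - rewrite phin //; rewrite opprB in h *.
    have := aadd _ _ h pp; rewrite subrK => ->.
    by rewrite opprD addrCA subrr addr0.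
have phiadd : forall x y : og_car G, phi (x + y) = phi x + phi y.
  move=> x y; case: (dec x) => p1 [q1 [pp1 [pq1 ->]]]; case: (dec y) => p2 [q2 [pp2 [pq2 ->]]].
  have -> : p1 - q1 + (p2 - q2) = (p1 + p2) - (q1 + q2).
    by rewrite opprD addrACA.
  rewrite (phisub _ _ (og_pos_add pp1 pp2) (og_pos_add pq1 pq2)) !phisub //.
  rewrite (aadd _ _ pp1 pp2) (aadd _ _ pq1 pq2).
  by rewrite opprD addrACA.
have phiN : forall x : og_car G, phi (- x) = - phi x.
  move=> x; apply: (addrI (phi x)); rewrite -phiadd !subrr phi0 //.
have phiz : forall g : og_car G, phi g = 0 -> g = 0.
  move=> g; case: (og_tri g) => [h|[//|h]].
  - by rewrite phip // => e0; case: (og_pos_ne0 (apos _ h)).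
  - rewrite phin // => /eqP; rewrite oppr_eq0 => /eqP e0.
    by case: (og_pos_ne0 (apos _ h)).
exists phi; split => //; split.
  move=> x y e0; apply/eqP; rewrite -subr_eq0; apply/eqP; apply: phiz.
  by rewrite phiadd phiN e0 subrr.
split.
  move=> y; case: (og_tri y) => [h|[->|h]].
  - by case: (asurj _ h) => x [px <-]; exists x; rewrite phip.
  - by exists 0.
  - case: (asurj _ h) => x [px ex]; exists (- x).
    by rewrite phin opprK // ex opprK.
move=> x y; rewrite !og_le_iff -phiN -phiadd.
set g := y - x; split.
  case=> [->|h]; first by left.
  by right; rewrite phip //; apply: apos.
case=> [/phiz ->|h]; first by left.
case: (og_tri g) => [h1|[h1|h1]]; first by right.
  by move: h; rewrite h1 phi0 => /og_pos_ne0.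
move: h; rewrite phin // => h.
by case: (og_pos_neg (apos _ h1) h).
Qed.

Lemma og_phi0 (G G' : r1og) (phi : og_car G -> og_car G') :
  (forall x y, phi (x + y) = phi x + phi y) -> phi 0 = 0.
Proof. by move=> add; apply: (addrI (phi 0)); rewrite -add !addr0. Qed.

Lemma og_phiMn (G G' : r1og) (phi : og_car G -> og_car G') :
  (forall x y, phi (x + y) = phi x + phi y) -> forall x n, phi (x *+ n) = phi x *+ n.
Proof.
move=> add x; elim => [|n IH]; first by rewrite !mulr0n; apply: og_phi0.
by rewrite !mulrS add IH.
Qed.

Lemma FQ_inj (G G' : r1og) : iso_functor (FQ G) (FQ G') <-> og_iso G G'.
Proof.
split; last first.
  move=> [phi [padd [pinj [psurj ple]]]].
  have p0 := og_phi0 padd.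
  have ppos : forall h, og_pos h -> og_pos (phi h).
    move=> h [h1 h2]; split; first by rewrite -p0 -ple.
    by move=> e; apply: h2; apply: pinj; rewrite e p0.
  pose psi (y : og_car G') := epsilon (inhabits 0) (fun x => phi x = y).
  have psiK : forall y, phi (psi y) = y.
    move=> y; case: (psurj y) => x ex.
    exact: (epsilon_spec (inhabits 0) (fun x => phi x = y) (ex_intro _ x ex)).
  have qpos : forall y, og_pos y -> og_pos (psi y).
    move=> y [h1 h2]; split; first by rewrite ple p0 psiK.
    by move=> e; apply: h2; rewrite -(psiK y) e p0.
  have f1 : forall U (x : FQ0 G U), og_pos (phi (proj1_sig x)) /\ U 0.
    by move=> U [x [px u0]]; split => //; apply: ppos.
  have f2 : forall U (x : FQ0 G' U), og_pos (psi (proj1_sig x)) /\ U 0.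
    by move=> U [x [px u0]]; split => //; apply: qpos.
  exists (fun (U : obj) (x : FQ0 G U) => exist (fun h => og_pos h /\ U 0) _ (f1 U x)),
    (fun (U : obj) (x : FQ0 G' U) => exist (fun h => og_pos h /\ U 0) _ (f2 U x)).
  split; first by move=> U x; apply: sig_eqP => /=; apply: pinj; rewrite psiK.
  split; first by move=> U x; apply: sig_eqP => /=; rewrite psiK.
  by move=> n U V p x; apply: sig_eqP => /=; rewrite (og_phiMn padd).
move=> [a [b [ab [ba nat]]]].
pose U0 := ivo (-1) 1.
have u0 : U0 0 by rewrite /U0 /= /iv; split => //; split; lra.
pose xh (h : og_car G) (hp : og_pos h) : FQ0 G U0 := exist _ h (conj hp u0).
pose al (h : og_car G) : og_car G' :=
  match excluded_middle_informative (og_pos h) with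
  | left hp => proj1_sig (a U0 (xh h hp)) | right _ => 0 end.
have alE : forall h, og_pos h -> forall U (x : FQ0 G U), proj1_sig x = h ->
    proj1_sig (a U x) = al h.
  move=> h hp U x ex.
  have w0 : capo U U0 0 by split => //; case: (proj2_sig x).
  pose xW : FQ0 G (capo U U0) := exist _ h (conj hp w0).
  have e1 : @F1 (FQ G) _ _ _ (hom_capl U U0) xW = x.
    by apply: sig_eqP; rewrite /= mulr1n.
  rewrite /al; case: excluded_middle_informative => [hp'|//].
  have e2 : @F1 (FQ G) _ _ _ (hom_capr U U0) xW = xh h hp'.
    by apply: sig_eqP; rewrite /= mulr1n.
  by rewrite -e1 -e2 !nat /= !mulr1n.
have alpos : forall h, og_pos h -> og_pos (al h).
  move=> h hp; rewrite -(alE h hp U0 (xh h hp)) //.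
  by case: (proj2_sig (a U0 (xh h hp))).
have alMn : forall h n, og_pos h -> (0 < n)%nat -> al (h *+ n) = al h *+ n.
  move=> h n hp n0.
  pose Un := ivo (-1) n%:R.
  have p : hom n U0 Un.
    split => // u [h1 [h2 h3]]; rewrite /= /iv -[u *+ n]mulr_natr.
    have np : 0 < n%:R :> R by rewrite ltr0n.
    by repeat split; nra.
  have := nat n U0 Un p (xh h hp) => /(congr1 (@proj1_sig _ _)) /=.
  rewrite (alE (h *+ n) (og_pos_muln n0 hp) Un _) //.
  by rewrite (alE h hp U0 (xh h hp)).
apply: (og_iso_of alpos).
- move=> h h' hp hp'; case: (og_gcd hp hp') => e [n [m [pe [n0 [m0 [-> ->]]]]]].
  have nm0 : (0 < n + m)%nat by rewrite addn_gt0 n0.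
  by rewrite -mulrnDr !alMn // mulrnDr.
- move=> h h' hp hp' e.
  have : a U0 (xh h hp) = a U0 (xh h' hp').
    by apply: sig_eqP; rewrite (alE h hp U0 (xh h hp)) // (alE h' hp' U0 (xh h' hp')).
  by move/(congr1 (b U0)); rewrite !ab => /(congr1 (@proj1_sig _ _)).
- move=> h' hp'; pose y : FQ0 G' U0 := exist _ h' (conj hp' u0).
  exists (proj1_sig (b U0 y)); split; first by case: (proj2_sig (b U0 y)).
  by rewrite -(alE _ (proj1 (proj2_sig (b U0 y))) U0 (b U0 y) erefl) ba.
Qed.

Section Point.
Variable F : functor.
Hypothesis hfl : flat F.
Hypothesis hco : continuous F.
Local Notation F1 := (@F1 F _ _ _).

Lemma F1n n m U V (p : hom n U V) (q : hom m U V) (x : F0 F U) :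
  n = m -> F1 p x = F1 q x.
Proof. by move=> e; apply: F1_wd; right. Qed.

Lemma F1c n m U V W (p : hom n U V) (q : hom m V W) (r : hom (m * n) U W) x :
  F1 q (F1 p x) = F1 r x.
Proof. exact: F1_comp. Qed.

Lemma F_empty U : obj_empty U -> F0 F U -> False.
Proof.
move=> e y.
have cov : forall x, U x -> exists i : False, (fun i : False => match i return obj with end) i x.
  by move=> x /e.
case: (@hco U False (fun i : False => match i return obj with end)
  (fun i : False => match i return hom 1 _ U with end) cov y).
by move=> [].
Qed.

Lemma F_ne U (x : F0 F U) : exists u, U u.
Proof.
apply: NNPP => h; apply: (F_empty _ x) => u uu; apply: h; by exists u.
Qed.

Lemma mult_inj n m W V (p : hom n W V) (q : hom m W V) w :
  F1 p w = F1 q w -> n = m.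
Proof.
move=> e; case: hfl => _ [_ h3].
case: (h3 _ _ _ _ p q w e) => W' [z [k [r [_ [em|enm]]]]].
  by case: (F_empty em z).
have k0 := hom_pos r.
by apply/eqP; rewrite -(eqn_pmul2r k0); apply/eqP.
Qed.

Definition Src U (x : F0 F U) (V : obj) :=
  exists (v : F0 F V) (i : hom 1 V U), F1 i v = x.

Lemma Src_self U (x : F0 F U) : Src x U.
Proof. by exists x, (hom_id U); rewrite F1_id. Qed.

Lemma Src_cap U (x : F0 F U) V1 V2 : Src x V1 -> Src x V2 -> exists w, V1 w /\ V2 w.
Proof.
move=> [v1 [i1 e1]] [v2 [i2 e2]].
case: hfl => _ [h2 _].
case: (h2 _ _ v1 v2) => W [z [n [m [p [q [ep eq]]]]]].
have e : F1 (hom_comp p i1) z = F1 (hom_comp q i2) z.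
  by rewrite -(F1c p i1) -(F1c q i2) ep eq e1 e2.
have nm := mult_inj e; rewrite !mul1n in nm; subst m.
case: (F_ne z) => u wu.
exists (u *+ n); split; [exact: p.2 | exact: q.2].
Qed.

Lemma Src_cover U (x : F0 F U) V : Src x V ->
  forall I (Vi : I -> obj) (sub : forall i, hom 1 (Vi i) V),
  (forall u, V u -> exists i, Vi i u) -> exists i, Src x (Vi i).
Proof.
move=> [v [iv e]] I Vi sub cov.
case: (hco sub cov v) => i [z ez].
exists i, z, (hom_comp (sub i) iv).
by rewrite -(F1c (sub i) iv) ez.
Qed.

Definition LB U (x : F0 F U) (y : R) :=
  exists V, Src x V /\ forall z, V z -> y <= z.

Definition islub (E : R -> Prop) (m : R) :=
  (forall y, E y -> y <= m) /\ (forall b, (forall y, E y -> y <= b) -> m <= b).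

Definition loc U (x : F0 F U) : R := epsilon (inhabits 0) (islub (LB x)).

Lemma loc_spec U (x : F0 F U) : islub (LB x) (loc x).
Proof.
apply: (epsilon_spec (inhabits 0) (islub (LB x))).
case: (obj_iv U) => a [b eU].
have bnd : bound (LB x).
  exists b => y [V [sV hV]]; apply/RleP.
  case: (Src_cap (Src_self x) sV) => w [uw vw].
  have := hV _ vw; have := (eU w).1 uw; rewrite /iv; lra.
have ne : exists y, LB x y.
  exists 0, U; split; first exact: Src_self.
  by move=> z; apply: obj_ge0.
case: (completeness _ bnd ne) => m [h1 h2]; exists m; split.
  by move=> y ey; apply/RleP; apply: h1.
by move=> c hc; apply/RleP; apply: h2 => y ey; apply/RleP; apply: hc.
Qed.

Lemma loc_in U (x : F0 F U) V : Src x V -> V (loc x).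
Proof.
move=> sV; case: (loc_spec x) => ub lub.
case: (obj_iv V) => a [b eV]; apply/eV; rewrite /iv.
have l0 : 0 <= loc x.
  apply: ub; exists V; split => // z; exact: obj_ge0.
split => //; split.
- pose Vi (k : nat) := capo V (ivo (a + (k.+1%:R)^-1) b).
  have [k sk] : exists k, Src x (Vi k).
    apply: (Src_cover sV (fun k => hom_capl V (ivo (a + (k.+1%:R)^-1) b))).
    move=> u vu; have := (eV u).1 vu; rewrite /iv => [[u0 [au ub']]].
    have [k hk] : exists k : nat, (k.+1%:R)^-1 < u - a by apply: archi_eps; lra.
    exists k; change (V u /\ iv (a + (k.+1%:R)^-1) b u); rewrite /iv.
    set e := (k.+1%:R)^-1 in hk *; by repeat split => //; lra.
  have h : LB x (a + (k.+1%:R)^-1).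
    by exists (Vi k); split => // z [_ [_ [hz _]]]; apply: ltW.
  have := ub _ h; have : 0 < (k.+1%:R : R)^-1 by rewrite invr_gt0 ltr0n.
  set e := (k.+1%:R)^-1 in h *; lra.
- pose Vi (k : nat) := capo V (ivo (-1) (b - (k.+1%:R)^-1)).
  have [k sk] : exists k, Src x (Vi k).
    apply: (Src_cover sV (fun k => hom_capl V (ivo (-1) (b - (k.+1%:R)^-1)))).
    move=> u vu; have := (eV u).1 vu; rewrite /iv => [[u0 [au ub']]].
    have [k hk] : exists k : nat, (k.+1%:R)^-1 < b - u by apply: archi_eps; lra.
    exists k; change (V u /\ iv (-1) (b - (k.+1%:R)^-1) u); rewrite /iv.
    set e := (k.+1%:R)^-1 in hk *; by repeat split => //; lra.
  have h : loc x <= b - (k.+1%:R)^-1.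
    apply: lub => y [V' [sV' hV']].
    case: (Src_cap sk sV') => w [[_ [_ [_ hw]]] vw].
    have := hV' _ vw; set e := (k.+1%:R)^-1 in hw *; lra.
  have : 0 < (k.+1%:R : R)^-1 by rewrite invr_gt0 ltr0n.
  set e := (k.+1%:R)^-1 in h *; lra.
Qed.

Lemma loc_self U (x : F0 F U) : U (loc x).
Proof. exact: loc_in (Src_self x). Qed.

Lemma loc_ge0 U (x : F0 F U) : 0 <= loc x.
Proof. exact: obj_ge0 (loc_self x). Qed.

Lemma loc_sub U (x : F0 F U) V (i : hom 1 V U) : V (loc x) -> Src x V.
Proof.
move=> vt; set t := loc x.
case: (obj_iv V) => c [d eV]; case: (obj_iv U) => aU [bU eU].
have := (eV t).1 vt; rewrite /iv => [[t0 [ct td]]].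
pose c' := (c + t) / 2; pose d' := (t + d) / 2.
pose Ui (o : option bool) : obj :=
  match o with None => V | Some true => capo U (ivo (-1) c')
  | Some false => capo U (ivo d' bU) end.
pose sub (o : option bool) : hom 1 (Ui o) U :=
  match o as o return hom 1 (Ui o) U with None => i
  | Some true => hom_capl U (ivo (-1) c') | Some false => hom_capl U (ivo d' bU) end.
have cov : forall u, U u -> exists o, Ui o u.
  move=> u uu; have := (eU u).1 uu; rewrite /iv => [[u0 [au ub]]].
  case: (ltrP u c') => h1.
    exists (Some true); change (U u /\ iv (-1) c' u); split => //.
    by rewrite /iv; repeat split => //; lra.
  case: (ltrP d' u) => h2.
    exists (Some false); change (U u /\ iv d' bU u); split => //.
    rewrite /iv; repeat split => //.
  exists None; apply/eV; rewrite /iv /c' /d' in h1 h2 *; repeat split => //; lra.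
case: (Src_cover (Src_self x) sub cov) => [[[]|]] s.
- have := loc_in s; move=> [_ [_ [_ h]]]; rewrite /c' in h; rewrite -/t in h; lra.
- have := loc_in s; move=> [_ [_ [h _]]]; rewrite /d' in h; rewrite -/t in h; lra.
- exact: s.
Qed.

Lemma loc_uniq U (x : F0 F U) s : (forall V, Src x V -> V s) -> s = loc x.
Proof.
move=> h; set t := loc x.
have ut := loc_self x; have t0 := loc_ge0 x; rewrite -/t in ut t0.
case: (ltrgtP s t) => // st.
- pose W := capo U (ivo s (t + (t - s))).
  have sW : Src x W.
    apply: (loc_sub (hom_capl U (ivo s (t + (t - s))))).
    by split => //; rewrite /iv -/t; repeat split => //; lra.
  by have [_ [_ [h1 _]]] := h _ sW; move: h1; rewrite ltxx.
- pose W := capo U (ivo (t - (s - t)) s).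
  have sW : Src x W.
    apply: (loc_sub (hom_capl U (ivo (t - (s - t)) s))).
    by split => //; rewrite /iv -/t; repeat split => //; lra.
  by have [_ [_ [_ h1]]] := h _ sW; move: h1; rewrite ltxx.
Qed.

Lemma loc_mul n U V (p : hom n U V) (x : F0 F U) : loc (F1 p x) = loc x *+ n.
Proof.
have n0 := hom_pos p.
have np : (n%:R : R) != 0 by rewrite gt_eqF // ltr0n.
suff : loc (F1 p x) / n%:R = loc x.
  by move=> <-; rewrite -[_ *+ n]mulr_natr divfK.
apply: loc_uniq => W [w [iW ew]].
have sS : Src (F1 p x) (sclo W n0).
  exists (F1 (hom_scl W n0) w), (hom_scl_sub n0 p iW).
  rewrite (F1c (hom_scl W n0) (hom_scl_sub n0 p iW)
    (hom_comp (hom_scl W n0) (hom_scl_sub n0 p iW))) -ew.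
  rewrite (F1c iW p (hom_comp iW p)).
  by apply: F1n; rewrite mul1n muln1.
exact: (loc_in sS).
Qed.

Section Rho.
Variable U0 : obj.
Variable x0 : F0 F U0.

Definition rwit U (x : F0 F U) (q : rat) :=
  exists W (z : F0 F W) n m (p : hom n W U) (p' : hom m W U0),
    F1 p z = x /\ F1 p' z = x0 /\ q = n%:R / m%:R.

Lemma rwit_ex U (x : F0 F U) : exists q, rwit x q.
Proof.
case: hfl => _ [h2 _]; case: (h2 _ _ x x0) => W [z [n [m [p [q [e1 e2]]]]]].
by exists (n%:R / m%:R), W, z, n, m, p, q.
Qed.

Lemma rwit_uniq U (x : F0 F U) q1 q2 : rwit x q1 -> rwit x q2 -> q1 = q2.
Proof.
move=> [W1 [z1 [n1 [m1 [p1 [p1' [e1 [e1' ->]]]]]]]].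
move=> [W2 [z2 [n2 [m2 [p2 [p2' [e2 [e2' ->]]]]]]]].
case: hfl => _ [h2 _]; case: (h2 _ _ z1 z2) => W [z [a [b [pa [pb [ea eb]]]]]].
have E1 : F1 (hom_comp pa p1) z = F1 (hom_comp pb p2) z.
  by rewrite -(F1c pa p1) -(F1c pb p2) ea eb e1 e2.
have E2 : F1 (hom_comp pa p1') z = F1 (hom_comp pb p2') z.
  by rewrite -(F1c pa p1') -(F1c pb p2') ea eb e1' e2'.
have h1 := mult_inj E1; have h2' := mult_inj E2.
have a0 := hom_pos pa; have b0 := hom_pos pb.
have m10 := hom_pos p1'; have m20 := hom_pos p2'.
have ee : (n1 * m2 = n2 * m1)%nat.
  have ab0 : (0 < a * b)%nat by rewrite muln_gt0 a0 b0.
  apply/eqP; rewrite -(eqn_pmul2r ab0); apply/eqP.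
  transitivity ((n1 * a) * (m2 * b))%nat; first by ring.
  by rewrite h1 -h2'; ring.
have m1p : (m1%:R : rat) != 0 by rewrite pnatr_eq0 -lt0n.
have m2p : (m2%:R : rat) != 0 by rewrite pnatr_eq0 -lt0n.
by apply/eqP; rewrite eqr_div // -!natrM ee.
Qed.

Definition rho U (x : F0 F U) : rat := epsilon (inhabits 0) (rwit x).

Lemma rho_spec U (x : F0 F U) : rwit x (rho x).
Proof. exact: (epsilon_spec (inhabits 0) (rwit x) (rwit_ex x)). Qed.

Lemma rho_eq U (x : F0 F U) q : rwit x q -> rho x = q.
Proof. by move=> h; apply: rwit_uniq (rho_spec x) h. Qed.

Lemma rho_mul k U V (q : hom k U V) (x : F0 F U) : rho (F1 q x) = rho x *+ k.
Proof.
have [W [z [n [m [p [p' [e1 [e2 ->]]]]]]]] := rho_spec x.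
apply: rho_eq; exists W, z, (k * n)%nat, m, (hom_comp p q), p'.
split.
  by rewrite -e1 (F1c p q (hom_comp p q)).
split => //.
by rewrite natrM -mulrA (mulr_natl (n%:R / m%:R : rat) k).
Qed.

Lemma rho_pos U (x : F0 F U) : 0 < rho x.
Proof.
have [W [z [n [m [p [p' [e1 [e2 ->]]]]]]]] := rho_spec x.
by rewrite divr_gt0 // ltr0n; [exact: hom_pos p | exact: hom_pos p'].
Qed.

Lemma rho_x0 : rho x0 = 1.
Proof.
apply: rho_eq; exists U0, x0, 1%nat, 1%nat, (hom_id U0), (hom_id U0).
by rewrite !F1_id divr1.
Qed.

Lemma rho_inj U (x y : F0 F U) : rho x = rho y -> x = y.
Proof.
move=> e; case: hfl => _ [h2 _]; case: (h2 _ _ x y) => W [z [n [m [p [q [ex ey]]]]]].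
have := e; rewrite -ex -ey !rho_mul => e'.
have zp := rho_pos z.
have nm : n = m by apply: (mulrn_inj (lt0r_neq0 zp)).
by subst m; apply: F1n.
Qed.

Lemma loc_rho U (x : F0 F U) : loc x = ratr (rho x) * loc x0.
Proof.
have [W [z [n [m [p [p' [e1 [e2 ->]]]]]]]] := rho_spec x.
rewrite -e1 -e2 !loc_mul.
have m0 : (m%:R : R) != 0 by rewrite pnatr_eq0 -lt0n; exact: hom_pos p'.
have -> : ratr (n%:R / m%:R) = (n%:R / m%:R : R) by rewrite fmorph_div !rmorph_nat.
rewrite -[loc z *+ n]mulr_natr -[loc z *+ m]mulr_natr.
by field.
Qed.

Lemma transport U1 (x1 : F0 F U1) (U : obj) : U (loc x1) ->
  exists y : F0 F U, rho y = rho x1 /\ loc y = loc x1.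
Proof.
move=> ut.
have sV : Src x1 (capo U1 U).
  by apply: (loc_sub (hom_capl U1 U)); split => //; exact: loc_self.
case: sV => v [i e].
exists (F1 (hom_capr U1 U) v); rewrite -e !rho_mul !loc_mul.
by rewrite !mulr1n.
Qed.


Definition Sp (q : rat) := exists U (x : F0 F U), rho x = q.

Lemma Sp_pos q : Sp q -> 0 < q.
Proof. by move=> [U [x <-]]; exact: rho_pos. Qed.

Lemma Sp_mul q k : Sp q -> (0 < k)%nat -> Sp (q *+ k).
Proof.
move=> [W [x <-]] k0; exists (sclo W k0), (F1 (hom_scl W k0) x).
by rewrite rho_mul.
Qed.

Lemma Sp_div a b : Sp a -> Sp b -> exists c n m, Sp c /\ (0 < n)%nat /\ (0 < m)%nat /\
  a = c *+ n /\ b = c *+ m.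
Proof.
move=> [U [x <-]] [V [y <-]].
case: hfl => _ [h2 _]; case: (h2 _ _ x y) => W [z [n [m [p [q [ex ey]]]]]].
exists (rho z), n, m; split; first by exists W, z.
split; first exact: hom_pos p. split; first exact: hom_pos q.
by rewrite -ex -ey !rho_mul.
Qed.

Lemma Sp_add a b : Sp a -> Sp b -> Sp (a + b).
Proof.
move=> sa sb; case: (Sp_div sa sb) => c [n [m [sc [n0 [m0 [-> ->]]]]]].
by rewrite -mulrnDr; apply: Sp_mul => //; rewrite addn_gt0 n0.
Qed.

Lemma Sp_sub a b : Sp a -> Sp b -> b < a -> Sp (a - b).
Proof.
move=> sa sb; case: (Sp_div sa sb) => c [n [m [sc [n0 [m0 [-> ->]]]]]] lt.
have mn : (m < n)%nat by apply: (mulrn_lt (Sp_pos sc)).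
have e : c *+ n - c *+ m = c *+ (n - m) by rewrite mulrnBr // ltnW.
by rewrite e; apply: Sp_mul => //; rewrite subn_gt0.
Qed.

Definition SQ (q : rat) := q = 0 \/ Sp q \/ Sp (- q).

Lemma Sp_diff a b : Sp a -> Sp b -> SQ (a - b).
Proof.
move=> sa sb; case: (ltrgtP a b) => h.
- by right; right; rewrite opprB; apply: Sp_sub.
- by right; left; apply: Sp_sub.
- by left; rewrite h subrr.
Qed.

Lemma SQ_sub : subgroupQ SQ.
Proof.
split; first by left.
move=> x y [->|[sx|sx]] [->|[sy|sy]].
- by left; rewrite subrr.
- by right; right; rewrite sub0r opprK.
- by right; left; rewrite sub0r.
- by right; left; rewrite subr0.
- exact: Sp_diff.
- by right; left; apply: Sp_add.
- by right; right; rewrite subr0.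
- by right; right; rewrite opprB addrC; apply: Sp_add.
- have -> : x - y = (- y) - (- x) by rewrite opprK addrC.
  exact: Sp_diff.
Qed.

Lemma SQ_nz : exists q, SQ q /\ q <> 0.
Proof.
exists 1; split; last by move/eqP; rewrite oner_eq0.
by right; left; exists U0, x0; exact: rho_x0.
Qed.

Lemma SQ_Sp q : SQ q -> 0 < q -> Sp q.
Proof.
move=> [->|[//|sq]] q0; first by rewrite ltxx in q0.
by have := Sp_pos sq; rewrite oppr_gt0 => h; have := lt_trans h q0; rewrite ltxx.
Qed.

Lemma surj_x0 : (exists (H : R -> Prop) (hH : rank_one_R H), iso_functor F (FH hH)) \/
  (exists G : r1og, iso_functor F (FQ G)).
Proof.
have hS := SQ_sub; have hnz := SQ_nz.
case: (classic (0 < loc x0)) => [t0 | nt0].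
- left.
  have allpos : forall U (x : F0 F U), 0 < loc x.
    by move=> U x; rewrite loc_rho mulr_gt0 // ltr0q; exact: rho_pos.
  pose H := fun h => exists q, SQ q /\ h = ratr q * loc x0.
  have hH : rank_one_R H := rank_one_img hS hnz t0.
  exists H, hH.
  have fa : forall U (x : F0 F U), U (loc x) /\ H (loc x) /\ 0 < loc x.
    move=> U x; split; first exact: loc_self.
    split; last exact: allpos.
    by exists (rho x); split; [right; left; exists U, x | exact: loc_rho].
  have ex_pre : forall U (s : FH0 H U), exists y : F0 F U, loc y = proj1_sig s.
    move=> U [v [uv [[q [sq ev]] v0]]] /=.
    have q0 : 0 < q.
      by move: v0; rewrite ev pmulr_lgt0 // ltr0q.
    case: (SQ_Sp sq q0) => U1 [x1 ex1].
    have l1 : loc x1 = v by rewrite loc_rho ex1 ev.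
    case: (@transport _ x1 U); first by rewrite l1.
    by move=> y [_ ly]; exists y; rewrite ly.
  pose b U (s : FH0 H U) := proj1_sig (constructive_indefinite_description _ (ex_pre U s)).
  have bE : forall U s, loc (b U s) = proj1_sig s.
    by move=> U s; rewrite /b; case: constructive_indefinite_description.
  have locinj : forall U (x y : F0 F U), loc x = loc y -> x = y.
    move=> U x y; rewrite (loc_rho x) (loc_rho y) => /(mulIf (lt0r_neq0 t0)) /fmorph_inj.
    exact: rho_inj.
  exists (fun U x => exist _ (loc x) (fa U x)), b.
  split; first by move=> U x; apply: locinj; rewrite bE.
  split; first by move=> U s; apply: sig_eqP; rewrite /= bE.
  by move=> n U V p x; apply: sig_eqP; rewrite /= loc_mul.
- right.
  have l0 : loc x0 = 0 by apply/eqP; rewrite eq_le loc_ge0 andbT leNgt; apply/negP.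
  have allz : forall U (x : F0 F U), loc x = 0 by move=> U x; rewrite loc_rho l0 mulr0.
  pose G := mkG hS hnz.
  exists G.
  have sq : forall U (x : F0 F U), bS SQ (rho x).
    by move=> U x; apply/bSP; right; left; exists U, x.
  have fa : forall U (x : F0 F U), og_pos (CarS hS (sq U x) : og_car G) /\ U 0.
    move=> U x; split; first by apply/mkG_pos; exact: rho_pos.
    by rewrite -(allz U x); exact: loc_self.
  have ex_pre : forall U (s : FQ0 G U), exists y : F0 F U, rho y = cval (proj1_sig s).
    move=> U [h [hp u0]] /=.
    have h0 : 0 < cval h by apply/mkG_pos.
    have sh : SQ (cval h) by apply/bSP; exact: cvalP.
    case: (SQ_Sp sh h0) => U1 [x1 ex1].
    case: (@transport _ x1 U); first by rewrite allz.
    by move=> y [ry _]; exists y; rewrite ry.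
  pose b U (s : FQ0 G U) := proj1_sig (constructive_indefinite_description _ (ex_pre U s)).
  have bE : forall U s, rho (b U s) = cval (proj1_sig s).
    by move=> U s; rewrite /b; case: constructive_indefinite_description.
  exists (fun (U : obj) (x : F0 F U) => exist (fun h => og_pos h /\ U 0) (CarS hS (sq U x) : og_car G) (fa U x)), b.
  split; first by move=> U x; apply: rho_inj; rewrite bE.
  split; first by move=> U s; apply: sig_eqP; apply: val_inj; rewrite /= bE.
  move=> n U V p x; apply: sig_eqP; apply: val_inj.
  by rewrite /= cvalMn /= rho_mul.
Qed.

End Rho.

Lemma surj : (exists (H : R -> Prop) (hH : rank_one_R H), iso_functor F (FH hH)) \/
  (exists G : r1og, iso_functor F (FQ G)).
Proof.
case: hfl => [[U0 [x0]] _]; exact: (surj_x0 x0).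
Qed.

End Point.

Theorem theorem3p9 :
  (* p_H and q_H are points: the functors are flat and continuous *)
  (forall (H : R -> Prop) (hH : rank_one_R H), flat (FH hH) /\ continuous (FH hH)) /\
  (forall G : r1og, flat (FQ G) /\ continuous (FQ G)) /\
  (* injectivity on (b) *)
  (forall (H H' : R -> Prop) (hH : rank_one_R H) (hH' : rank_one_R H'),
     iso_functor (FH hH) (FH hH') <-> (forall x, H x <-> H' x)) /\
  (* injectivity on (a), up to isomorphism of ordered groups *)
  (forall G G' : r1og, iso_functor (FQ G) (FQ G') <-> og_iso G G') /\
  (* the images of (a) and (b) are disjoint *)
  (forall (H : R -> Prop) (hH : rank_one_R H) (G : r1og),
     ~ iso_functor (FH hH) (FQ G)) /\
  (* surjectivity: every point is isomorphic to some p_H or q_H *)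
  (forall F : functor, flat F -> continuous F ->
     (exists (H : R -> Prop) (hH : rank_one_R H), iso_functor F (FH hH)) \/
     (exists G : r1og, iso_functor F (FQ G))).
Proof.
split; first by move=> H hH; split; [exact: flat_FH | exact: cont_FH].
split; first by move=> G; split; [exact: flat_FQ | exact: cont_FQ].
split; first exact: FH_inj.
split; first exact: FQ_inj.
split; first exact: disjoint_FH_FQ.
by move=> F hfl hco; exact: surj hfl hco.
Qed.
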